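(* Let $H$ be a hereditary artin algebra, $n\ge2$, and let $f=\{f^i\}_{i=1}^n\colon X\to Y$ be an irreducible morphism in $\mathbf{C_n}({\rm proj}\,H)$ with $X$ or $Y$ indecomposable. Then: (1) $f$ is of type (ret) if and only if ${\rm Ker}\,f\in\mathbf{C_n}({\rm proj}\,H)\setminus\{0\}$; (2) if $f$ is of type (ret-irred-sec), then ${\rm Ker}\,f=0$.
   Context: For an artin algebra $\Lambda$ and $n\ge 2$, $\mathbf{C_n}({\rm proj}\,\Lambda)$ is the full subcategory of the category of complexes of finitely generated right $\Lambda$-modules consisting of complexes $X=(X^i,d^i_X)$ with $X^i$ projective for all $i$ and $X^i=0$ for $i\notin\{1,\dots,n\}$; morphisms are chain maps $f=\{f^i\}$. Kernels and cokernels are computed degreewise (with induced differentials) in the category of complexes of modules. A morphism in $\mathbf{C_n}({\rm proj}\,\Lambda)$ is irreducible if it is neither a section nor a retraction, and whenever $f=gh$ then $h$ is a section or $g$ is a retraction. Every irreducible $f=\{f^i\}$ in $\mathbf{C_n}({\rm proj}\,\Lambda)$ is of one of the following types: (sec) every $f^i$ is a section in ${\rm proj}\,\Lambda$; (ret) every $f^i$ is a retraction in ${\rm proj}\,\Lambda$; (ret-irred-sec) there is $i$ with $f^i$ irreducible in ${\rm proj}\,\Lambda$, $f^j$ a section for all $j>i$ and $f^j$ a retraction for all $j<i$. *)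

(* Defs.v *)
From HB Require Import structures.
From mathcomp Require Import all_boot all_order all_algebra.
Set Implicit Arguments. Unset Strict Implicit. Unset Printing Implicit Defensive.
Import GRing.Theory.
Local Open Scope ring_scope.

Definition is_ideal (R : comPzRingType) (I : R -> Prop) : Prop :=
  I 0 /\ (forall x y, I x -> I y -> I (x + y)) /\ (forall r x, I x -> I (r * x)).

Definition artinian (R : comPzRingType) : Prop :=
  forall I : nat -> R -> Prop,
    (forall k, is_ideal (I k)) ->
    (forall k x, I k.+1 x -> I k x) ->
    exists N, forall k, (N <= k)%N -> forall x, I k x <-> I N x.

Definition fin_gen (A : pzRingType) (M : lmodType A) : Prop :=
  exists s : seq M, forall x : M,
    exists c : 'I_(size s) -> A, x = \sum_(i < size s) c i *: s`_i.

Definition artin_algebra (R : comPzRingType) (H : algType R) : Prop :=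
  artinian R /\ fin_gen H.

Definition projective (A : pzRingType) (P : lmodType A) : Prop :=
  forall (N M : lmodType A) (g : {linear N -> M}) (h : {linear P -> M}),
    (forall y : M, exists x : N, g x = y) ->
    exists k : {linear P -> N}, forall p, g (k p) = h p.

Definition in_proj (A : pzRingType) (P : lmodType A) : Prop :=
  fin_gen P /\ projective P.

(* hereditary: every submodule of a projective module is projective
   (right modules over H, i.e. left modules over H^c) *)
Definition hereditary (R : comPzRingType) (H : algType R) : Prop :=
  forall (M P : lmodType (H^c)%type) (i : {linear M -> P}),
    projective P -> injective i -> projective M.

Definition mod_section (A : pzRingType) (M N : lmodType A) (f : {linear M -> N}) :=
  exists g : {linear N -> M}, forall x, g (f x) = x.
Definition mod_retraction (A : pzRingType) (M N : lmodType A) (f : {linear M -> N}) :=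
  exists g : {linear N -> M}, forall y, f (g y) = y.
Definition mod_irreducible (A : pzRingType) (M N : lmodType A) (f : {linear M -> N}) :=
  ~ mod_section f /\ ~ mod_retraction f /\
  forall (Z : lmodType A) (h : {linear M -> Z}) (g : {linear Z -> N}),
    in_proj Z -> (forall x, f x = g (h x)) -> mod_section h \/ mod_retraction g.

(* Complexes are indexed by nat; degree i is X^i; X^i = 0 unless 1 <= i <= n
   (in particular degrees <= 0 of the Z-indexed complex are zero). *)
Record cplx (A : pzRingType) (n : nat) := Cplx {
  cobj : nat -> lmodType A;
  cdif : forall i, {linear cobj i -> cobj i.+1};
  cdd : forall i x, cdif i.+1 (cdif i x) = 0;
  cproj : forall i, in_proj (cobj i);
  cbound : forall i, (i < 1)%N \/ (n < i)%N -> forall x : cobj i, x = 0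
}.

Definition cmor (A : pzRingType) n (X Y : cplx A n) :=
  forall i, {linear cobj X i -> cobj Y i}.

Definition is_chain (A : pzRingType) n (X Y : cplx A n) (f : cmor X Y) : Prop :=
  forall i x, f i.+1 (cdif X i x) = cdif Y i (f i x).

Definition cx_section (A : pzRingType) n (X Y : cplx A n) (f : cmor X Y) :=
  exists g : cmor Y X, is_chain g /\ forall i x, g i (f i x) = x.
Definition cx_retraction (A : pzRingType) n (X Y : cplx A n) (f : cmor X Y) :=
  exists g : cmor Y X, is_chain g /\ forall i y, f i (g i y) = y.

Definition cx_irreducible (A : pzRingType) n (X Y : cplx A n) (f : cmor X Y) :=
  ~ cx_section f /\ ~ cx_retraction f /\
  forall (Z : cplx A n) (h : cmor X Z) (g : cmor Z Y),
    is_chain h -> is_chain g -> (forall i x, f i x = g i (h i x)) ->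
    cx_section h \/ cx_retraction g.

Definition cx_zero (A : pzRingType) n (X : cplx A n) : Prop :=
  forall i (x : cobj X i), x = 0.

Definition cx_indecomposable (A : pzRingType) n (X : cplx A n) : Prop :=
  ~ cx_zero X /\
  forall (X1 X2 : cplx A n) (i1 : cmor X1 X) (i2 : cmor X2 X)
         (p1 : cmor X X1) (p2 : cmor X X2),
    is_chain i1 -> is_chain i2 -> is_chain p1 -> is_chain p2 ->
    (forall i x, p1 i (i1 i x) = x) -> (forall i x, p2 i (i2 i x) = x) ->
    (forall i x, p1 i (i2 i x) = 0) -> (forall i x, p2 i (i1 i x) = 0) ->
    (forall i x, i1 i (p1 i x) + i2 i (p2 i x) = x) ->
    cx_zero X1 \/ cx_zero X2.

Definition type_ret (A : pzRingType) n (X Y : cplx A n) (f : cmor X Y) :=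
  forall i, mod_retraction (f i).
Definition type_ret_irred_sec (A : pzRingType) n (X Y : cplx A n) (f : cmor X Y) :=
  exists i, mod_irreducible (f i) /\
    (forall j, (i < j)%N -> mod_section (f j)) /\
    (forall j, (j < i)%N -> mod_retraction (f j)).

Definition is_kernel (A : pzRingType) (M N K : lmodType A)
    (g : {linear M -> N}) (k : {linear K -> M}) : Prop :=
  injective k /\ forall x, g x = 0 <-> exists y, k y = x.

Definition ker_in_Cn_nonzero (A : pzRingType) n (X Y : cplx A n) (f : cmor X Y) :=
  (forall i, exists (K : lmodType A) (k : {linear K -> cobj X i}),
      is_kernel (f i) k /\ in_proj K) /\
  exists i (x : cobj X i), f i x = 0 /\ x <> 0.

Definition ker_zero (A : pzRingType) n (X Y : cplx A n) (f : cmor X Y) :=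
  forall i x, f i x = 0 -> x = 0.

(* Main.v *)
Set Warnings "-notation-overridden,-ambiguous-paths,-projection-no-head-constant,-redundant-canonical-projection".
Require Import Defs.
From HB Require Import structures.
From mathcomp Require Import all_boot all_order all_algebra.
From mathcomp Require Import boolp.
From Stdlib Require Import Classical.

Module Helpers.
Set Implicit Arguments. Unset Strict Implicit. Unset Printing Implicit Defensive.
Import GRing.Theory.
Local Open Scope ring_scope.

Section MkL.
Variables (A : pzRingType) (U V : lmodType A) (g : U -> V) (lg : linear g).
Definition gL (_ : linear g) := g.
HB.instance Definition _ := GRing.isLinear.Build A U V *:%R (gL lg) lg.
Definition mkL : {linear U -> V} := gL lg.
Lemma mkLE x : mkL x = g x. Proof. by []. Qed.
End MkL.

Definition subP (A : pzRingType) (M : lmodType A) (P : M -> Prop) :=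
  P 0 /\ (forall x y, P x -> P y -> P (x + y)) /\ (forall a x, P x -> P (a *: x)).

Section Sub.
Variables (A : pzRingType) (M : lmodType A) (P : M -> Prop) (hP : subP P).
Definition Pb : pred M := fun x => `[< P x >].
Record submT (h : subP P) := SubM { sv : M; sp : Pb sv }.
HB.instance Definition _ := [isSub for (@sv hP)].
HB.instance Definition _ := [Choice of submT hP by <:].
Lemma Pb_closed : subsemimod_closed Pb.
Proof.
case: hP => P0 [PD PZ]; split; first split.
- by apply/asboolP.
- by move=> x y /asboolP Px /asboolP Py; apply/asboolP; apply: PD.
- by move=> a x /asboolP Px; apply/asboolP; apply: PZ.
Qed.
HB.instance Definition _ := GRing.SubChoice_isSubLmodule.Build _ _ _ (submT hP) Pb_closed.
Definition svL : {linear submT hP -> M} := (val : submT hP -> M).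
Lemma svL_inj : injective svL. Proof. exact: val_inj. Qed.
Lemma svLP (y : submT hP) : P (svL y). Proof. case: y => v /= pv; exact/asboolP. Qed.

Variables (U : lmodType A) (g : U -> M) (lg : linear g) (hg : forall u, P (g u)).
Definition corf (u : U) : submT hP := @SubM hP (g u) (asboolT (hg u)).
Lemma corf_lin : linear corf.
Proof. move=> a x y; apply: svL_inj; rewrite linearP /=. exact: lg. Qed.
Definition corL : {linear U -> submT hP} := mkL corf_lin.
Lemma corLE u : svL (corL u) = g u. Proof. by []. Qed.
End Sub.

Lemma fin_gen_surj (A : pzRingType) (U V : lmodType A) (g : {linear U -> V}) :
  fin_gen U -> (forall y, exists x, g x = y) -> fin_gen V.
Proof.
move=> [s gen] surj; exists (map g s) => y.
have [x <-] := surj y; have [c ->] := gen x; rewrite linear_sum /=.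
suff: forall m (e : size s = m), exists c' : 'I_m -> A,
  \sum_(i < size s) g (c i *: s`_i) = \sum_(i < m) c' i *: (map g s)`_i.
  by apply; rewrite size_map.
move=> m <-; exists c; apply: eq_bigr => i _.
by rewrite linearZ /= (nth_map 0).
Qed.

Section Main.
Variables (R : comPzRingType) (H : algType R) (Hher : hereditary H) (n : nat).
Local Notation A := (H^c)%type.
Variables (X Y : cplx A n) (f : cmor X Y) (hchain : is_chain f).

Lemma sub_proj (M : lmodType A) (P : M -> Prop) (hP : subP P) :
  projective M -> projective (submT hP).
Proof. move=> pM; have := @Hher _ _ (svL hP) pM. apply. exact: svL_inj. Qed.

Lemma imP i : subP (fun y : cobj Y i => exists x, f i x = y).
Proof.
split; first by exists 0; rewrite linear0.
split; first by move=> _ _ [x <-] [y <-]; exists (x + y); rewrite linearD.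
by move=> a _ [x <-]; exists (a *: x); rewrite linearZ.
Qed.

Definition ZO i : lmodType A := submT (imP i).

Lemma dlin i : linear (fun z : ZO i => cdif Y i (svL (imP i) z)).
Proof. by move=> a u v; rewrite !linearP. Qed.
Lemma dimg i (z : ZO i) : (fun y : cobj Y i.+1 => exists x, f i.+1 x = y)
   (cdif Y i (svL (imP i) z)).
Proof. have [x <-] := svLP z; exists (cdif X i x); exact: hchain. Qed.
Definition Zd i : {linear ZO i -> ZO i.+1} := @corL _ _ _ (imP i.+1) _ _ (@dlin i) (@dimg i).

Lemma Zdd i x : Zd i.+1 (Zd i x) = 0.
Proof. by apply: svL_inj; rewrite !corLE cdd linear0. Qed.

Lemma Zproj i : in_proj (ZO i).
Proof.
have [fgX _] := cproj X i; have [_ pY] := cproj Y i.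
split; last exact: sub_proj.
have lc : linear (f i) by move=> a u v; rewrite linearP.
apply: (fin_gen_surj (g := @corL _ _ _ (imP i) _ _ lc (fun x => ex_intro _ x erefl))) fgX _.
move=> z; have [x hx] := svLP z; exists x; apply: svL_inj; by rewrite corLE.
Qed.

Lemma Zbound i : (i < 1)%N \/ (n < i)%N -> forall x : ZO i, x = 0.
Proof. move=> hi x; apply: svL_inj; rewrite linear0; exact: cbound. Qed.

Definition Zc : cplx A n := Cplx Zdd Zproj Zbound.

Lemma flin i : linear (f i). Proof. by move=> a u v; rewrite linearP. Qed.
Definition pm : cmor X Zc := fun i => @corL _ _ _ (imP i) _ _ (@flin i) (fun x => ex_intro _ x erefl).
Definition im : cmor Zc Y := fun i => svL (imP i).

Lemma pm_chain : is_chain pm.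
Proof. move=> i x; apply: svL_inj; exact: hchain. Qed.
Lemma im_chain : is_chain im.
Proof. by []. Qed.

Lemma ker_ret : cx_irreducible f -> (exists i x, f i x = 0 /\ x <> 0) -> type_ret f.
Proof.
move=> [_ [_ irr]] [i0 [x0 [fx0 nx0]]].
have [] := irr Zc pm im pm_chain im_chain (fun i x => erefl).
  move=> [g [_ gp]]; exfalso; apply: nx0.
  have : pm i0 x0 = 0 by apply: svL_inj; rewrite linear0; exact: fx0.
  by move=> h; rewrite -(gp i0 x0) h linear0.
move=> [g [_ ig]] i.
have [_ pY] := cproj Y i.
have lid : linear (fun y : cobj Y i => y) by [].
have surj : forall y, exists x, f i x = y by move=> y; rewrite -(ig i y); exact: (svLP (g i y)).
have [k hk] := pY _ _ (f i) (mkL lid) surj.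
by exists k => y; rewrite hk.
Qed.

Lemma kP i : subP (fun x : cobj X i => f i x = 0).
Proof.
split; first by rewrite linear0.
split; first by move=> x y hx hy; rewrite linearD hx hy addr0.
move=> a x hx; rewrite linearZ /= hx. exact: scaler0.
Qed.

Lemma ret_ker : cx_irreducible f -> type_ret f -> ker_in_Cn_nonzero f.
Proof.
move=> [_ [nret _]] hret; split.
  move=> i; exists (submT (kP i)), (svL (kP i)); split.
    split; first exact: svL_inj.
    move=> x; split; first by move=> h; exists (@SubM _ _ _ (kP i) x (asboolT h)).
    by move=> [y <-]; exact: (svLP y).
  have [fgX pX] := cproj X i; split; last exact: sub_proj.
  have [s hs] := hret i.
  have lq : linear (fun x : cobj X i => x - s (f i x)).
    move=> a u v; rewrite !linearP /= scalerBr -scalerN; rewrite -!addrA; congr (_ + _); rewrite addrCA //.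
  have hq : forall x, (fun x : cobj X i => f i x = 0) (x - s (f i x)).
    by move=> x /=; rewrite linearB /= hs subrr.
  apply: (fin_gen_surj (g := @corL _ _ _ (kP i) _ _ lq hq)) fgX _.
  move=> z; exists (svL (kP i) z); apply: svL_inj; rewrite corLE.
  by rewrite (svLP z) linear0 subr0.
apply: NNPP => hne; apply: nret.
have inj : forall i (a b : cobj X i), f i a = f i b -> a = b.
  move=> i a b hab; apply/eqP; rewrite -subr_eq0; apply/eqP.
  apply: NNPP => nz; apply: hne; exists i, (a - b); split => //.
  by rewrite linearB hab subrr.
pose g : cmor Y X := fun i => projT1 (cid (hret i)).
have hg : forall i y, f i (g i y) = y by move=> i y; rewrite /g; case: cid.
exists g; split => [i y|i y].
  apply: (inj i.+1); rewrite hchain !hg //.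
by apply: hg.
Qed.
End Main.
End Helpers.
Import Helpers.

Theorem proposition2p5 (R : comPzRingType) (H : algType R)
  (Hart : artin_algebra H) (Hher : hereditary H)
  (n : nat) (hn : (2 <= n)%N)
  (X Y : cplx (H^c)%type n) (f : cmor X Y)
  (hchain : is_chain f) (hirr : cx_irreducible f)
  (hind : cx_indecomposable X \/ cx_indecomposable Y) :
  (type_ret f <-> ker_in_Cn_nonzero f) /\
  (type_ret_irred_sec f -> ker_zero f).
Proof.
split.
  split; first exact: (ret_ker Hher hchain hirr).
  by move=> [_ hk]; exact: (ker_ret Hher hchain hirr hk).
move=> [i [[_ [nret _]] _]] j x fx.
apply: NNPP => nx; apply: nret.
exact: (ker_ret Hher hchain hirr (ex_intro _ j (ex_intro _ x (conj fx nx))) i).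
Qed.
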